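(* Let $(A,\cdot,[\,,\,],\varepsilon)$ be an $F$-manifold color algebra and let $\mathfrak B$ be a nondegenerate symmetric bilinear form on $A$ satisfying $\mathfrak B(x\cdot y,z)=\mathfrak B(x,y\cdot z)$ and $\mathfrak B([x,y],z)=\mathfrak B(x,[y,z])$ for all homogeneous $x,y,z\in A$. Then $(A,\cdot,[\,,\,],\varepsilon)$ is a coherence $F$-manifold color algebra, i.e. for all homogeneous $x,y,z,w\in A$: $$P_{x\cdot y}(z,w)=\varepsilon(x,y+z)P_y(z,x\cdot w)+\varepsilon(y,z)P_x(z,y\cdot w),$$ $$P_x(y,z)\cdot w=-\varepsilon(x,y+z)T(y,z)(x\cdot w)+x\cdot T(y,z)(w),$$ where $T(y,z)(w)=-\varepsilon(y,z)[z,y\cdot w]-[y,z\cdot w]+[y\cdot z,w]$.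
   Context: $G$ is an abelian group and $\varepsilon:G\times G\to\mathbb K\setminus\{0\}$ a skew-symmetric bicharacter: $\varepsilon(a,b)\varepsilon(b,a)=1$, $\varepsilon(a,b+c)=\varepsilon(a,b)\varepsilon(a,c)$, $\varepsilon(a+b,c)=\varepsilon(a,c)\varepsilon(b,c)$; $\mathbb K$ algebraically closed of characteristic zero, $A$ finite-dimensional and $G$-graded. For homogeneous $x\in A_a,y\in A_b$, $\varepsilon(x,y)$ means $\varepsilon(a,b)$, $\varepsilon(x,y+z)$ means $\varepsilon(a,b+c)$, etc. An $\varepsilon$-commutative associative algebra is a $G$-graded associative algebra $(A,\cdot)$ with $A_aA_b\subseteq A_{a+b}$ and $x\cdot y=\varepsilon(x,y)y\cdot x$. A Lie color algebra is a $G$-graded space with bilinear $[\,,\,]$, $[A_a,A_b]\subseteq A_{a+b}$, $[x,y]=-\varepsilon(x,y)[y,x]$, $\varepsilon(z,x)[x,[y,z]]+\varepsilon(y,z)[z,[x,y]]+\varepsilon(x,y)[y,[z,x]]=0$. An $F$-manifold color algebra is $(A,\cdot,[\,,\,],\varepsilon)$ with $(A,\cdot,\varepsilon)$ an $\varepsilon$-commutative associative algebra and $(A,[\,,\,],\varepsilon)$ a Lie color algebra such that $P_{x\cdot y}(z,w)=x\cdot P_y(z,w)+\varepsilon(x,y)y\cdot P_x(z,w)$ for all homogeneous $x,y,z,w$, where $P_x(y,z)=[x,y\cdot z]-[x,y]\cdot z-\varepsilon(x,y)y\cdot[x,z]$. A coherence $F$-manifold color algebra is an $F$-manifold color algebra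 satisfying the two identities in the claim. *)

(* Defs.v *)
From HB Require Import structures.
From mathcomp Require Import all_boot all_order all_algebra.
Set Implicit Arguments. Unset Strict Implicit. Unset Printing Implicit Defensive.
Import GRing.Theory.
Local Open Scope ring_scope.

Section Defs.
Variables (G : zmodType) (K : fieldType) (A : vectType K).

Definition skew_bichar (eps : G -> G -> K) : Prop :=
  [/\ forall a b, eps a b != 0,
      forall a b, eps a b * eps b a = 1,
      forall a b c, eps a (b + c) = eps a b * eps a c &
      forall a b c, eps (a + b) c = eps a c * eps b c].

(* A = (+)_{a in G} A_a : every element is a finite sum of homogeneous
   elements and the sum of the components is direct *)
Definition G_graded (Ag : G -> {vspace A}) : Prop :=
  (forall x : A, exists s : seq G, x \in (\sum_(a <- s) Ag a)%VS) /\
  (forall (s : seq G) (v : G -> A), uniq s -> (forall a, v a \in Ag a) ->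
      \sum_(a <- s) v a = 0 -> forall a, a \in s -> v a = 0).

Definition bilin (f : A -> A -> A) : Prop :=
  (forall x, linear (f x)) /\ (forall y, linear (fun x => f x y)).

Definition bilin_form (B : A -> A -> K) : Prop :=
  (forall (k : K) x y z, B (k *: x + y) z = k * B x z + B y z) /\
  (forall (k : K) x y z, B x (k *: y + z) = k * B x y + B x z).

Definition eps_comm_assoc (eps : G -> G -> K) (Ag : G -> {vspace A})
  (mul : A -> A -> A) : Prop :=
  [/\ bilin mul,
      forall a b x y, x \in Ag a -> y \in Ag b -> mul x y \in Ag (a + b),
      forall x y z, mul x (mul y z) = mul (mul x y) z &
      forall a b x y, x \in Ag a -> y \in Ag b -> mul x y = eps a b *: mul y x].

Definition lie_color (eps : G -> G -> K) (Ag : G -> {vspace A})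
  (br : A -> A -> A) : Prop :=
  [/\ bilin br,
      forall a b x y, x \in Ag a -> y \in Ag b -> br x y \in Ag (a + b),
      forall a b x y, x \in Ag a -> y \in Ag b -> br x y = - (eps a b *: br y x) &
      forall a b c x y z, x \in Ag a -> y \in Ag b -> z \in Ag c ->
        eps c a *: br x (br y z) + eps b c *: br z (br x y)
          + eps a b *: br y (br z x) = 0].

(* P_x(y,z) for x in A_a, y in A_b *)
Definition Pop (eps : G -> G -> K) (mul br : A -> A -> A) (a b : G) (x y z : A) : A :=
  br x (mul y z) - mul (br x y) z - eps a b *: mul y (br x z).

(* T(y,z)(w) for y in A_b, z in A_c *)
Definition Top (eps : G -> G -> K) (mul br : A -> A -> A) (b c : G) (y z w : A) : A :=
  - (eps b c *: br z (mul y w)) - br y (mul z w) + br (mul y z) w.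

Definition F_manifold_color (eps : G -> G -> K) (Ag : G -> {vspace A})
  (mul br : A -> A -> A) : Prop :=
  [/\ eps_comm_assoc eps Ag mul, lie_color eps Ag br &
      forall a b c d x y z w, x \in Ag a -> y \in Ag b -> z \in Ag c -> w \in Ag d ->
        Pop eps mul br (a + b) c (mul x y) z w =
          mul x (Pop eps mul br b c y z w) + eps a b *: mul y (Pop eps mul br a c x z w)].

Definition coherence_identities (eps : G -> G -> K) (Ag : G -> {vspace A})
  (mul br : A -> A -> A) : Prop :=
  (forall a b c d x y z w, x \in Ag a -> y \in Ag b -> z \in Ag c -> w \in Ag d ->
     Pop eps mul br (a + b) c (mul x y) z w =
       eps a (b + c) *: Pop eps mul br b c y z (mul x w)
       + eps b c *: Pop eps mul br a c x z (mul y w)) /\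
  (forall a b c d x y z w, x \in Ag a -> y \in Ag b -> z \in Ag c -> w \in Ag d ->
     mul (Pop eps mul br a b x y z) w =
       - (eps a (b + c) *: Top eps mul br b c y z (mul x w))
       + mul x (Top eps mul br b c y z w)).

Definition coherence_F_manifold_color (eps : G -> G -> K) (Ag : G -> {vspace A})
  (mul br : A -> A -> A) : Prop :=
  F_manifold_color eps Ag mul br /\ coherence_identities eps Ag mul br.

End Defs.

(* Main.v *)
Require Import Defs.
From HB Require Import structures.
From mathcomp Require Import all_boot all_order all_algebra.
From mathcomp Require Import ring.
Import GRing.Theory.
Local Open Scope ring_scope.

Theorem proposition3p8 (G : zmodType) (K : closedFieldType)
  (hK : [pchar K] =i pred0) (A : vectType K)
  (eps : G -> G -> K) (Ag : G -> {vspace A}) (mul br : A -> A -> A)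
  (B : A -> A -> K) :
  skew_bichar eps -> G_graded Ag ->
  F_manifold_color eps Ag mul br ->
  bilin_form B ->
  (forall x y, B x y = B y x) ->
  (forall x, (forall y, B x y = 0) -> x = 0) ->
  (forall a b c x y z, x \in Ag a -> y \in Ag b -> z \in Ag c ->
     B (mul x y) z = B x (mul y z)) ->
  (forall a b c x y z, x \in Ag a -> y \in Ag b -> z \in Ag c ->
     B (br x y) z = B x (br y z)) ->
  coherence_F_manifold_color eps Ag mul br.
Proof.
move=> He Hgr HF0 HB Bsym Bnd BiM BiB.
have HF := HF0.
move: He Hgr HF0 HB => [e0 eV eDr eDl] [Hspan _]
  [[[mulL mulR] mulG massoc mulC] [[brL brR] brG brS _] HFm] [BL BR].
split=> //.
have Bl0 : forall z, B 0 z = 0.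
  move=> z; have h := BL 1 0 0 z; rewrite scale1r addr0 mul1r in h.
  by apply: (addrI (B 0 z)); rewrite addr0 -h.
have Br0 : forall z, B z 0 = 0.
  move=> z; have h := BR 1 z 0 0; rewrite scale1r addr0 mul1r in h.
  by apply: (addrI (B z 0)); rewrite addr0 -h.
have BlD : forall x y z, B (x + y) z = B x z + B y z.
  by move=> x y z; rewrite -{1}[x]scale1r BL mul1r.
have BrD : forall x y z, B z (x + y) = B z x + B z y.
  by move=> x y z; rewrite -{1}[x]scale1r BR mul1r.
have BlZ : forall k x z, B (k *: x) z = k * B x z.
  by move=> k x z; rewrite -[k *: x]addr0 BL Bl0 addr0.
have BrZ : forall k x z, B z (k *: x) = k * B z x.
  by move=> k x z; rewrite -[k *: x]addr0 BR Br0 addr0.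
have BlN : forall x z, B (- x) z = - B x z.
  by move=> x z; rewrite -scaleN1r BlZ mulN1r.
have BrN : forall x z, B z (- x) = - B z x.
  by move=> x z; rewrite -scaleN1r BrZ mulN1r.
have BlB : forall x y z, B (x - y) z = B x z - B y z.
  by move=> x y z; rewrite BlD BlN.
have BrB : forall x y z, B z (x - y) = B z x - B z y.
  by move=> x y z; rewrite BrD BrN.
have lin0 : forall f : A -> A, linear f -> f 0 = 0.
  move=> f Lf; have h := Lf 1 0 0; rewrite scale1r addr0 scale1r in h.
  by apply: (addrI (f 0)); rewrite addr0 -h.
have linZ : forall f : A -> A, linear f -> forall k v, f (k *: v) = k *: f v.
  by move=> f Lf k v; rewrite -[k *: v]addr0 Lf lin0 // addr0.
have linN : forall f : A -> A, linear f -> forall v, f (- v) = - f v.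
  by move=> f Lf v; rewrite -scaleN1r linZ // scaleN1r.
have linD : forall f : A -> A, linear f -> forall u v, f (u + v) = f u + f v.
  by move=> f Lf u v; rewrite -{1}[u]scale1r Lf scale1r.
have mulZr : forall x k v, mul x (k *: v) = k *: mul x v by move=> x; apply: linZ.
have mulNr : forall x v, mul x (- v) = - mul x v by move=> x; apply: linN.
have mulZl : forall x k v, mul (k *: v) x = k *: mul v x
  by move=> x; apply: (linZ (fun v => mul v x)).
have mulNl : forall x v, mul (- v) x = - mul v x
  by move=> x; apply: (linN (fun v => mul v x)).
have brZr : forall x k v, br x (k *: v) = k *: br x v by move=> x; apply: linZ.
have brNr : forall x v, br x (- v) = - br x v by move=> x; apply: linN.
have brZl : forall x k v, br (k *: v) x = k *: br v x
  by move=> x; apply: (linZ (fun v => br v x)).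
have brNl : forall x v, br (- v) x = - br v x
  by move=> x; apply: (linN (fun v => br v x)).
have Hnd : forall X Y, (forall f u, u \in Ag f -> B X u = B Y u) -> X = Y.
  move=> X Y H; apply/eqP; rewrite -subr_eq0; apply/eqP; apply: Bnd => u.
  have [s] := Hspan u; elim: s u => [|a s IH] u.
    by rewrite big_nil memv0 => /eqP ->; rewrite Br0.
  rewrite big_cons => /memv_addP [u1 h1 [u2 h2 ->]].
  by rewrite BrD (IH u2 h2) BlB (H _ _ h1) subrr addr0.
have memE : forall p q v, v \in Ag p -> p = q -> v \in Ag q by move=> p q v h <-.
have memPop : forall a b c x y z, x \in Ag a -> y \in Ag b -> z \in Ag c ->
    Pop eps mul br a b x y z \in Ag (a + b + c).
  move=> a b c x y z hx hy hz; rewrite /Pop.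
  apply: rpredB; [apply: rpredB|apply: rpredZ].
  - by apply: memE (brG _ _ _ _ hx (mulG _ _ _ _ hy hz)) _; rewrite addrA.
  - exact: mulG (brG _ _ _ _ hx hy) hz.
  - by apply: memE (mulG _ _ _ _ hy (brG _ _ _ _ hx hz)) _; rewrite addrCA addrA.
have memTop : forall b c d y z w, y \in Ag b -> z \in Ag c -> w \in Ag d ->
    Top eps mul br b c y z w \in Ag (b + c + d).
  move=> b c d y z w hy hz hw; rewrite /Top.
  apply: rpredD; [apply: rpredB; [rewrite rpredN; apply: rpredZ|]|].
  - by apply: memE (brG _ _ _ _ hz (mulG _ _ _ _ hy hw)) _; rewrite addrCA addrA.
  - by apply: memE (brG _ _ _ _ hy (mulG _ _ _ _ hz hw)) _; rewrite addrA.
  - exact: brG (mulG _ _ _ _ hy hz) hw.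
have eVi : forall p q, eps q p = (eps p q)^-1.
  by move=> p q; apply: (mulfI (e0 p q)); rewrite eV mulfV ?e0.
have Psym : forall a b c x y z, x \in Ag a -> y \in Ag b -> z \in Ag c ->
    Pop eps mul br a b x y z = eps b c *: Pop eps mul br a c x z y.
  move=> a b c x y z hx hy hz; apply: Hnd => f u hu.
  rewrite /Pop (mulC _ _ _ _ hy hz) brZr (mulC _ _ _ _ (brG _ _ _ _ hx hy) hz).
  rewrite (mulC _ _ _ _ hy (brG _ _ _ _ hx hz)).
  rewrite !BlB !BlZ !BlB !BlZ eDl eDr (eVi a b).
  field; exact: e0.
have L1 : forall a b c d x y z w, x \in Ag a -> y \in Ag b -> z \in Ag c -> w \in Ag d ->
    B (Pop eps mul br a b x y z) w = eps a b * B y (Pop eps mul br a c x z w).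
  move=> a b c d x y z w hx hy hz hw.
  have hyz := mulG _ _ _ _ hy hz.
  have e1 : B (br x (mul y z)) w = - (eps a (b + c) * B y (mul z (br x w))).
    by rewrite (brS _ _ _ _ hx hyz) BlN BlZ (BiB _ _ _ _ _ _ hyz hx hw)
      (BiM _ _ _ _ _ _ hy hz (brG _ _ _ _ hx hw)).
  have e2 : B (mul (br x y) z) w = - (eps a b * B y (br x (mul z w))).
    by rewrite (BiM _ _ _ _ _ _ (brG _ _ _ _ hx hy) hz hw) (brS _ _ _ _ hx hy) BlN BlZ
      (BiB _ _ _ _ _ _ hy hx (mulG _ _ _ _ hz hw)).
  have e3 : B (mul y (br x z)) w = B y (mul (br x z) w).
    by rewrite (BiM _ _ _ _ _ _ hy (brG _ _ _ _ hx hz) hw).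
  rewrite /Pop !BlB BlZ e1 e2 e3 !BrB BrZ eDr. ring.
have Lcyc : forall a b c x y z, x \in Ag a -> y \in Ag b -> z \in Ag c ->
    eps a b * B y (mul x z) = eps c a * B y (mul x z).
  move=> a b c x y z hx hy hz.
  have h1 : B (mul x y) z = eps a b * B y (mul x z).
    by rewrite (mulC _ _ _ _ hx hy) BlZ (BiM _ _ _ _ _ _ hy hx hz).
  have h2 : B (mul x y) z = eps c a * B y (mul x z).
    by rewrite (BiM _ _ _ _ _ _ hx hy hz) Bsym (BiM _ _ _ _ _ _ hy hz hx)
      (mulC _ _ _ _ hz hx) BrZ.
  by rewrite -h1 -h2.
have Xlem : forall d f g w u P, w \in Ag d -> u \in Ag f -> P \in Ag g ->
    B w (mul u P) = eps g d * eps g f * B w (mul u P).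
  move=> d f g w u P hw hu hP.
  rewrite (mulC _ _ _ _ hu hP) BrZ.
  have h := Lcyc g d f P w u hP hw hu.
  have -> : eps g d * eps g f * (eps f g * B w (mul P u))
      = (eps g f * eps f g) * (eps g d * B w (mul P u)) by ring.
  by rewrite h eV mul1r.
have L2 : forall b c g f y z v u, y \in Ag b -> z \in Ag c -> v \in Ag g -> u \in Ag f ->
    B (Top eps mul br b c y z v) u
      = eps (b + c) g * eps (b + c) f * B v (Pop eps mul br f b u y z).
  move=> b c g f y z v u hy hz hv hu.
  have hyv := mulG _ _ _ _ hy hv; have hzv := mulG _ _ _ _ hz hv.
  have hyz := mulG _ _ _ _ hy hz.
  have t1 : B (br z (mul y v)) u = - (eps c (b + g) * (eps b g * B v (mul y (br z u)))).
    by rewrite (brS _ _ _ _ hz hyv) BlN BlZ (BiB _ _ _ _ _ _ hyv hz hu)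
      (mulC _ _ _ _ hy hv) BlZ (BiM _ _ _ _ _ _ hv hy (brG _ _ _ _ hz hu)).
  have t2 : B (br y (mul z v)) u = - (eps b (c + g) * (eps c g * B v (mul z (br y u)))).
    by rewrite (brS _ _ _ _ hy hzv) BlN BlZ (BiB _ _ _ _ _ _ hzv hy hu)
      (mulC _ _ _ _ hz hv) BlZ (BiM _ _ _ _ _ _ hv hz (brG _ _ _ _ hy hu)).
  have t3 : B (br (mul y z) v) u = - (eps (b + c) g * B v (br (mul y z) u)).
    by rewrite (brS _ _ _ _ hyz hv) BlN BlZ (BiB _ _ _ _ _ _ hv hyz hu).
  have r1 : B v (br u (mul y z)) = - (eps f (b + c) * B v (br (mul y z) u)).
    by rewrite (brS _ _ _ _ hu hyz) BrN BrZ.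
  have r2 : B v (mul (br u y) z) = eps (f + b) c * (- (eps f b * B v (mul z (br y u)))).
    by rewrite (mulC _ _ _ _ (brG _ _ _ _ hu hy) hz) BrZ (brS _ _ _ _ hu hy) mulNr mulZr BrN BrZ.
  have r3 : B v (mul y (br u z)) = - (eps f c * B v (mul y (br z u))).
    by rewrite (brS _ _ _ _ hu hz) mulNr mulZr BrN BrZ.
  rewrite /Top /Pop BlD !BlB BlN BlZ t1 t2 t3 !BrB BrZ r1 r2 r3 !eDl !eDr.
  rewrite (eVi b c) (eVi b f) (eVi c f).
  by field; rewrite ?e0.
split.
  move=> a b c d x y z w hx hy hz hw; apply: Hnd => f u hu.
  have hxy := mulG _ _ _ _ hx hy; have hxw := mulG _ _ _ _ hx hw.
  have hyw := mulG _ _ _ _ hy hw.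
  rewrite (Psym _ _ _ _ _ _ hxy hz hw) BlZ (L1 _ _ _ _ _ _ _ _ hxy hw hz hu)
    (HFm _ _ _ _ _ _ _ _ hx hy hz hu) BrD BrZ.
  rewrite BlD !BlZ (Psym _ _ _ _ _ _ hy hz hxw) BlZ (L1 _ _ _ _ _ _ _ _ hy hxw hz hu)
    (mulC _ _ _ _ hx hw) BlZ (BiM _ _ _ _ _ _ hw hx (memPop _ _ _ _ _ _ hy hz hu)).
  rewrite (Psym _ _ _ _ _ _ hx hz hyw) BlZ (L1 _ _ _ _ _ _ _ _ hx hyw hz hu)
    (mulC _ _ _ _ hy hw) BlZ (BiM _ _ _ _ _ _ hw hy (memPop _ _ _ _ _ _ hx hz hu)).
  rewrite !eDl !eDr ?(eVi a b) ?(eVi a c) ?(eVi b c).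
  by field; rewrite ?e0.
move=> a b c d x y z w hx hy hz hw; apply: Hnd => f u hu.
have hP := memPop _ _ _ _ _ _ hx hy hz.
have hT := memTop _ _ _ _ _ _ hy hz hw.
rewrite (BiM _ _ _ _ _ _ hP hw hu) Bsym (BiM _ _ _ _ _ _ hw hu hP) (Xlem _ _ _ _ _ _ hw hu hP).
rewrite BlD BlN BlZ (L2 _ _ _ _ _ _ _ _ hy hz (mulG _ _ _ _ hx hw) hu)
  (mulC _ _ _ _ hx hw) BlZ (BiM _ _ _ _ _ _ hw hx (memPop _ _ _ _ _ _ hu hy hz)).
rewrite (mulC _ _ _ _ hx hT) BlZ (BiM _ _ _ _ _ _ hT hx hu)
  (L2 _ _ _ _ _ _ _ _ hy hz hw (mulG _ _ _ _ hx hu)) (HFm _ _ _ _ _ _ _ _ hx hu hy hz) BrD BrZ.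
rewrite !eDl !eDr ?(eVi a b) ?(eVi a c) ?(eVi b c) ?(eVi a d) ?(eVi a f).
by field; rewrite ?e0.
Qed.
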